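(* Let $X_1,\dots,X_n$ be features and $Y$ a target that is not a.s. constant, $\mathcal{F}=\{1,\dots,n\}$. If $Y=g(X_k)$ almost surely for some function $g$ and some $k\in\mathcal{F}$ (i.e. feature $k$ is fully informative), then $\mathrm{FI}(i)\le\mathrm{FI}(k)$ for every $i\in\mathcal{F}$.
   Context: All random variables are discrete with finite support and defined on a common probability space. For discrete random variables (or random vectors) $X$ and $Y$, define $$\mathrm{UD}(X,Y):=\sum_x p_X(x)\sum_y \bigl|p_{Y\mid X=x}(y)-p_Y(y)\bigr|,$$ and, when $Y$ is not almost surely constant, $\mathrm{Dep}(X,Y):=\mathrm{UD}(X,Y)/\mathrm{UD}(Y,Y)$. Given features $X_1,\dots,X_n$ with index set $\mathcal{F}=\{1,\dots,n\}$ and $S\subseteq\mathcal{F}$, write $X_S=(X_i)_{i\in S}$ ($X_\emptyset$ constant) and $\mathrm{Dep}(S,Y):=\mathrm{Dep}(X_S,Y)$. The Berkelmans–Pries feature importance is $$\mathrm{FI}(i):=\sum_{S\subseteq\mathcal{F}\setminus\{i\}}\frac{|S|!\,(n-|S|-1)!}{n!}\bigl(\mathrm{Dep}(S\cup\{i\},Y)-\mathrm{Dep}(S,Y)\bigr).$$ *)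

(* Defs.v *)
From HB Require Import structures.
From mathcomp Require Import all_boot all_order all_algebra.
Set Implicit Arguments. Unset Strict Implicit. Unset Printing Implicit Defensive.
Import Order.TTheory GRing.Theory Num.Theory.
Local Open Scope ring_scope.

Definition is_prob (R : realFieldType) (Om : finType) (P : Om -> R) : Prop :=
  (forall w, 0 <= P w) /\ \sum_(w : Om) P w = 1.

Definition pmf (R : realFieldType) (Om : finType) (P : Om -> R)
  (A : finType) (X : Om -> A) (x : A) : R :=
  \sum_(w : Om | X w == x) P w.

Definition jpmf (R : realFieldType) (Om : finType) (P : Om -> R)
  (A B : finType) (X : Om -> A) (Y : Om -> B) (x : A) (y : B) : R :=
  \sum_(w : Om | (X w == x) && (Y w == y)) P w.

(* UD(X,Y) = sum_x p_X(x) sum_y |p_{Y|X=x}(y) - p_Y(y)|, with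
   p_{Y|X=x}(y) = P(X=x,Y=y)/P(X=x).  Terms with p_X(x) = 0 contribute 0. *)
Definition UD (R : realFieldType) (Om : finType) (P : Om -> R)
  (A B : finType) (X : Om -> A) (Y : Om -> B) : R :=
  \sum_(x : A) pmf P X x *
     \sum_(y : B) `| jpmf P X Y x y / pmf P X x - pmf P Y y |.

Definition Dep (R : realFieldType) (Om : finType) (P : Om -> R)
  (A B : finType) (X : Om -> A) (Y : Om -> B) : R :=
  UD P X Y / UD P Y Y.

(* The random vector X_S = (X_i)_{i in S}, encoded as a dependent finite
   function whose i-th component is Some (X_i w) for i in S and None
   otherwise (X_emptyset is constant). *)
Definition XS (Om : finType) (n : nat) (T : 'I_n -> finType)
  (X : forall i : 'I_n, Om -> T i) (S : {set 'I_n}) (w : Om)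
  : {dffun forall i : 'I_n, option (T i)} :=
  [ffun i => if i \in S then Some (X i w) else None].

Definition DepS (R : realFieldType) (Om : finType) (P : Om -> R)
  (n : nat) (T : 'I_n -> finType) (X : forall i : 'I_n, Om -> T i)
  (B : finType) (Y : Om -> B) (S : {set 'I_n}) : R :=
  Dep P (XS X S) Y.

Definition FI (R : realFieldType) (Om : finType) (P : Om -> R)
  (n : nat) (T : 'I_n -> finType) (X : forall i : 'I_n, Om -> T i)
  (B : finType) (Y : Om -> B) (i : 'I_n) : R :=
  \sum_(S : {set 'I_n} | i \notin S)
     ((#|S|`! * (n - #|S| - 1)`!)%:R / (n`!)%:R) *
     (DepS P X Y (S :|: [set i]) - DepS P X Y S).

(* Main.v *)
Require Import Defs.
From HB Require Import structures.
From mathcomp Require Import all_boot all_order all_algebra.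
From mathcomp Require Import ring lra.
Set Implicit Arguments. Unset Strict Implicit. Unset Printing Implicit Defensive.
Import Order.TTheory GRing.Theory Num.Theory.
Local Open Scope ring_scope.

Section Aux.
Variables (R : realFieldType) (Om : finType) (P : Om -> R).
Hypothesis hP : forall w, 0 <= P w.

Lemma pmf_ge0 (A : finType) (X : Om -> A) x : 0 <= pmf P X x.
Proof. by apply: sumr_ge0 => w _. Qed.

Lemma jpmf_ge0 (A B : finType) (X : Om -> A) (Y : Om -> B) x y :
  0 <= jpmf P X Y x y.
Proof. by apply: sumr_ge0 => w _. Qed.

Lemma jpmf_le (A B : finType) (X : Om -> A) (Y : Om -> B) x y :
  jpmf P X Y x y <= pmf P X x.
Proof.
rewrite /pmf (bigID (fun w => Y w == y)) /= lerDl.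
by apply: sumr_ge0 => w _.
Qed.

Lemma sum_part (A : finType) (X : Om -> A) (Q : pred Om) :
  \sum_x \sum_(w | (X w == x) && Q w) P w = \sum_(w | Q w) P w.
Proof.
rewrite (partition_big X (fun _ => true)) //=.
apply: eq_bigr => x _; apply: eq_bigl => w; by rewrite andbC.
Qed.

Lemma sum_pmf (A : finType) (X : Om -> A) : \sum_x pmf P X x = \sum_w P w.
Proof.
rewrite -(sum_part X predT); apply: eq_bigr => x _.
by apply: eq_bigl => w; rewrite andbT.
Qed.

Lemma sum_jpmf (A B : finType) (X : Om -> A) (Y : Om -> B) y :
  \sum_x jpmf P X Y x y = pmf P Y y.
Proof. exact: (sum_part X (fun w => Y w == y)). Qed.

Lemma UD_alt (A B : finType) (X : Om -> A) (Y : Om -> B) :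
  UD P X Y = \sum_y \sum_x `|jpmf P X Y x y - pmf P X x * pmf P Y y|.
Proof.
rewrite exchange_big; apply: eq_bigr => x _; rewrite mulr_sumr.
apply: eq_bigr => y _.
have px0 := pmf_ge0 X x.
have j0 := jpmf_ge0 X Y x y.
have jle := jpmf_le X Y x y.
case: (eqVneq (pmf P X x) 0) => [hx|hne].
  have -> : jpmf P X Y x y = 0 by apply/le_anti; rewrite j0 -hx jle.
  by rewrite hx !mul0r subr0 normr0.
rewrite -(ger0_norm px0) -normrM; congr `|_|; rewrite ger0_norm //; field; exact: hne.
Qed.

Definition M (B : finType) (Y : Om -> B) :=
  \sum_y (pmf P Y y * (1 - pmf P Y y) + (1 - pmf P Y y) * pmf P Y y).

Hypothesis hP1 : \sum_w P w = 1.

Lemma term_le (j p q : R) : 0 <= j -> j <= p -> 0 <= q -> q <= 1 ->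
  `|j - p * q| <= j * (1 - q) + (p - j) * q.
Proof.
move=> h1 h2 h3 h4; rewrite ler_norml; apply/andP; split; nra.
Qed.

Lemma term_eq (j p q : R) : 0 <= j -> j <= p -> 0 <= q -> q <= 1 ->
  j = 0 \/ j = p ->
  `|j - p * q| = j * (1 - q) + (p - j) * q.
Proof.
move=> h1 h2 h3 h4 [->|->].
  rewrite sub0r normrN ger0_norm; [ring | apply: mulr_ge0 => //; lra].
rewrite ger0_norm; [ring|]. have : 0 <= p * (1 - q) by apply: mulr_ge0; lra.
lra.
Qed.

Lemma pmf_le1 (A : finType) (X : Om -> A) x : pmf P X x <= 1.
Proof.
rewrite -hP1 (bigID (fun w => X w == x)) /= lerDl.
by apply: sumr_ge0 => w _.
Qed.

Lemma sum_bound (A B : finType) (X : Om -> A) (Y : Om -> B) y :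
  \sum_x (jpmf P X Y x y * (1 - pmf P Y y) + (pmf P X x - jpmf P X Y x y) * pmf P Y y)
  = pmf P Y y * (1 - pmf P Y y) + (1 - pmf P Y y) * pmf P Y y.
Proof.
by rewrite big_split /= -!mulr_suml sumrB sum_jpmf sum_pmf hP1.
Qed.

Lemma UD_le (A B : finType) (X : Om -> A) (Y : Om -> B) : UD P X Y <= M Y.
Proof.
rewrite UD_alt; apply: ler_sum => y _; rewrite -(sum_bound X).
apply: ler_sum => x _; apply: term_le.
- exact: jpmf_ge0.
- exact: jpmf_le.
- exact: pmf_ge0.
- exact: pmf_le1.
Qed.

Lemma UD_eq (A B : finType) (X : Om -> A) (Y : Om -> B) :
  (forall x y, jpmf P X Y x y = 0 \/ jpmf P X Y x y = pmf P X x) ->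
  UD P X Y = M Y.
Proof.
move=> Hc.
rewrite UD_alt; apply: eq_bigr => y _; rewrite -(sum_bound X).
apply: eq_bigr => x _; apply: term_eq => //.
- exact: jpmf_ge0.
- exact: jpmf_le.
- exact: pmf_ge0.
- exact: pmf_le1.
Qed.

Lemma jpmf_cases (A B : finType) (X : Om -> A) (Y : Om -> B) :
  (forall w w', 0 < P w -> 0 < P w' -> X w = X w' -> Y w = Y w') ->
  forall x y, jpmf P X Y x y = 0 \/ jpmf P X Y x y = pmf P X x.
Proof.
move=> H x y.
case: (boolP [exists w, [&& X w == x, Y w == y & 0 < P w]]).
  move/existsP=> [w0 /and3P [/eqP hx /eqP hy hp]]; right.
  rewrite /pmf (bigID (fun w => Y w == y)) /=.
  rewrite [X in _ = _ + X]big1 ?addr0 // => w /andP [/eqP hxw hyw].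
  have := hP w; rewrite le0r => /orP [/eqP //| hpw].
  move/negP: hyw => [].
  by apply/eqP; rewrite (H w w0 hpw hp) ?hx ?hy // hxw hx.
move=> hne; left; apply: big1 => w /andP [hx hy].
have := hP w; rewrite le0r => /orP [/eqP //| hpw].
by move/existsPn: hne => /(_ w); rewrite hx hy hpw.
Qed.

End Aux.

Lemma split_pair (R : realFieldType) n (F : {set 'I_n} -> R) (i k : 'I_n) :
  i != k ->
  \sum_(S : {set 'I_n} | i \notin S) F S =
  \sum_(S : {set 'I_n} | (i \notin S) && (k \notin S)) (F S + F (S :|: [set k])).
Proof.
move=> hik; rewrite big_split /= [LHS](bigID (fun S : {set 'I_n} => k \in S)) /= addrC.
congr (_ + _).
rewrite (reindex_onto (fun S => S :|: [set k]) (fun S => S :\ k)) /=; last first.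
  by move=> S /andP [_ hk]; rewrite setUC setD1K.
apply: eq_bigl => S.
case hk: (k \in S).
  rewrite andbF; apply/negbTE; apply/negP => /andP [_ /eqP E].
  by move: hk; rewrite -E !inE eqxx.
rewrite setUC setU1K ?hk // eqxx !inE (negbTE hik) /= eqxx !andbT.
by [].
Qed.

Lemma pos_le_sum (R : realFieldType) (Om : finType) (P : Om -> R) (Q : pred Om) w :
  (forall w, 0 <= P w) -> Q w -> P w <= \sum_(v | Q v) P v.
Proof.
move=> hP hw; rewrite (bigD1 w) //= lerDl; by apply: sumr_ge0 => v _.
Qed.

Lemma M_pos (R : realFieldType) (Om : finType) (P : Om -> R) (B : finType) (Y : Om -> B) :
  is_prob P -> ~ (exists c : B, forall w, 0 < P w -> Y w = c) -> 0 < M P Y.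
Proof.
move=> [hP hP1] hnc.
case: (boolP [exists w, 0 < P w]); last first.
  move=> /existsPn hn; exfalso.
  have : \sum_w P w = 0.
    apply: big1 => w _; have := hP w; rewrite le0r => /orP [/eqP //|h].
    by have := hn w; rewrite h.
  by rewrite hP1; apply/eqP; rewrite oner_eq0.
move=> /existsP [w0 hw0].
case: (boolP [exists w, (0 < P w) && (Y w != Y w0)]); last first.
  move=> /existsPn hn; exfalso; apply: hnc; exists (Y w0) => w hw.
  by have := hn w; rewrite hw /= negbK => /eqP.
move=> /existsP [w1 /andP [hw1 hne]].
set c := Y w0.
have h1 : P w0 <= pmf P Y c by apply: pos_le_sum => //; rewrite eqxx.
have h2 : pmf P Y c + P w1 <= 1.
  rewrite -hP1 (bigID (fun w => Y w == c)) /= lerD2l.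
  by apply: pos_le_sum.
rewrite /M (bigD1 c) //=.
have r : 0 <= \sum_(y | y != c) (pmf P Y y * (1 - pmf P Y y) + (1 - pmf P Y y) * pmf P Y y).
  apply: sumr_ge0 => y _.
  have := pmf_ge0 hP Y y; have := pmf_le1 hP hP1 Y y.
  move=> a b; apply: addr_ge0; apply: mulr_ge0; lra.
have : 0 < pmf P Y c * (1 - pmf P Y c) by apply: mulr_gt0; lra.
nra.
Qed.

Theorem mainTheorem11 (R : realFieldType) (Om : finType) (P : Om -> R)
  (n : nat) (T : 'I_n -> finType) (X : forall i : 'I_n, Om -> T i)
  (B : finType) (Y : Om -> B) :
  is_prob P ->
  (* Y is not almost surely constant *)
  ~ (exists c : B, forall w, 0 < P w -> Y w = c) ->
  forall (k : 'I_n) (g : T k -> B),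
  (* Y = g(X_k) almost surely *)
  (forall w, 0 < P w -> Y w = g (X k w)) ->
  forall i : 'I_n, FI P X Y i <= FI P X Y k.
Proof.
move=> hprob hnc k g hg i.
have Mp := M_pos hprob hnc.
move: (hprob) => [hP hP1].
have UDY : UD P Y Y = M P Y.
  by apply: UD_eq => //; apply: jpmf_cases.
have D1 : forall S : {set 'I_n}, k \in S -> DepS P X Y S = 1.
  move=> S hk; rewrite /DepS /Dep UDY (UD_eq hP hP1) ?divff //; first by rewrite gt_eqF.
  apply: jpmf_cases => // w w' hw hw' E.
  rewrite (hg w hw) (hg w' hw'); congr (g _).
  move: E => /ffunP /(_ k); rewrite /XS !ffunE hk.
  by case.
have Dle : forall S : {set 'I_n}, DepS P X Y S <= 1.
  move=> S; rewrite /DepS /Dep UDY ler_pdivrMr // mul1r.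
  exact: UD_le.
case: (eqVneq i k) => [->|hik]; first exact: le_refl.
have hki : k != i by rewrite eq_sym.
rewrite /FI (split_pair _ hik) (split_pair _ hki).
rewrite [X in _ <= X]big_andbC.
apply: ler_sum => S /andP [hi hk].
rewrite (D1 (S :|: [set k] :|: [set i])); last by rewrite !inE eqxx ?orbT.
rewrite (D1 (S :|: [set i] :|: [set k])); last by rewrite !inE eqxx ?orbT.
rewrite (D1 (S :|: [set k])); last by rewrite !inE eqxx ?orbT.
have -> : #|S :|: [set k]| = #|S :|: [set i]|.
  by rewrite [S :|: [set k]]setUC cardsU1 hk [S :|: [set i]]setUC cardsU1 hi.
have := Dle (S :|: [set i]).
set a := DepS P X Y (S :|: [set i]).
set d := DepS P X Y S.
set w0 := ((#|S|`! * (n - #|S| - 1)`!)%:R / (n`!)%:R : R).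
set w1 := ((#|S :|: [set i]|`! * (n - #|S :|: [set i]| - 1)`!)%:R / (n`!)%:R : R).
have hw0 : 0 <= w0 by rewrite /w0 divr_ge0 ?ler0n.
have hw1 : 0 <= w1 by rewrite /w1 divr_ge0 ?ler0n.
move=> ha; nra.
Qed.
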